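(* Let $(\gamma_{n})_{n\in\mathbb{N}}$ be nonnegative integrable functions on $[0,\infty)$ with $\rho:=\sup_{n\in\mathbb{N}}\int_{0}^{\infty}\gamma_{n}(t)dt<1$. For $M\in\mathbb{N}$ and $s\ge0$ set $C_{M}^{1}(s,M)=1$, $C_{M}^{2}(s,M)=0$, and recursively for $1\le n<M$, $$C_{n}^{1}(s,M):=1+\int_{0}^{s}C_{n+1}^{1}(s-r,M)\gamma_{n}(r)\,dr,$$ $$C_{n}^{2}(s,M):=\int_{0}^{s}\left(C_{n+1}^{2}(s-r,M)+\tfrac{1}{2}[C_{n+1}^{1}(s-r,M)]^{2}\right)\gamma_{n}(r)\,dr.$$ Then for all $M\in\mathbb{N}$, $1\le n\le M$ and $s\ge0$, $$C_{n}^{1}(s,M)\le\frac{1}{1-\rho}\qquad\text{and}\qquad C_{n}^{2}(s,M)\le\frac{1}{(1-\rho)^{3}}.$$ *)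

(* Defs.v *)
From HB Require Import structures.
From mathcomp Require Import all_boot all_order all_algebra.
From mathcomp Require Import all_classical all_reals all_analysis.
Set Implicit Arguments. Unset Strict Implicit. Unset Printing Implicit Defensive.
Import Order.TTheory GRing.Theory Num.Theory.
Import numFieldNormedType.Exports.
Local Open Scope classical_set_scope.
Local Open Scope ring_scope.
Local Open Scope ereal_scope.

(* Cfun1 R gamma M k s  =  C^1_{M-k}(s, M)   (k = M - n steps remaining) *)
Fixpoint Cfun1 (R : realType) (gamma : nat -> R -> R) (M k : nat) (s : R) : \bar R :=
  match k with
  | 0 => 1
  | k'.+1 => 1 + \int[@lebesgue_measure R]_(r in `[0%R, s]%classic)
                   (Cfun1 gamma M k' (s - r)%R * (gamma (M - k'.+1)%N r)%:E)
  end.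

(* Cfun2 R gamma M k s  =  C^2_{M-k}(s, M) *)
Fixpoint Cfun2 (R : realType) (gamma : nat -> R -> R) (M k : nat) (s : R) : \bar R :=
  match k with
  | 0 => 0
  | k'.+1 => \int[@lebesgue_measure R]_(r in `[0%R, s]%classic)
               ((Cfun2 gamma M k' (s - r)%R
                 + (2^-1)%:E * (Cfun1 gamma M k' (s - r)%R * Cfun1 gamma M k' (s - r)%R))
                * (gamma (M - k'.+1)%N r)%:E)
  end.

Definition C1 (R : realType) (gamma : nat -> R -> R) (n : nat) (s : R) (M : nat) : \bar R :=
  Cfun1 gamma M (M - n)%N s.
Definition C2 (R : realType) (gamma : nat -> R -> R) (n : nat) (s : R) (M : nat) : \bar R :=
  Cfun2 gamma M (M - n)%N s.

(* Main.v *)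
Require Import Defs.
From HB Require Import structures.
From mathcomp Require Import all_boot all_order all_algebra.
From mathcomp Require Import all_classical all_reals all_analysis.
From mathcomp.algebra_tactics Require Import ring lra.
From mathcomp.zify Require Import zify.
Import Order.TTheory GRing.Theory Num.Theory.
Import numFieldNormedType.Exports.
Local Open Scope classical_set_scope.
Local Open Scope ring_scope.
Local Open Scope ereal_scope.

Lemma le_int_nm (R : realType) (D : set R) (f1 f2 : R -> \bar R) :
  (forall x, D x -> 0 <= f1 x) -> (forall x, D x -> f1 x <= f2 x) ->
  \int[@lebesgue_measure R]_(x in D) f1 x <= \int[@lebesgue_measure R]_(x in D) f2 x.
Proof.
move=> f10 f12.
have f20 : forall x, D x -> 0 <= f2 x by move=> x Dx; exact: le_trans (f10 x Dx) (f12 x Dx).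
rewrite ge0_integralE // [X in _ <= X]ge0_integralE //.
apply: le_ereal_sup => _ [h hf <-]; exists h => // x.
apply: le_trans (hf x) _; rewrite !patchE; case: ifP => // /set_mem Dx.
exact: f12.
Qed.

Lemma key (R : realType) (gamma : nat -> R -> R) (rho : R)
  (hint : forall n : nat, (0 < n)%N ->
     (@lebesgue_measure R).-integrable `[0%R, +oo[%classic (fun t => (gamma n t)%:E))
  (hnn : forall n : nat, (0 < n)%N -> forall t : R, (0 <= t)%R -> (0 <= gamma n t)%R)
  (hrho : ereal_sup [set \int[@lebesgue_measure R]_(t in `[0%R, +oo[%classic) (gamma n t)%:E
                     | n in [set n : nat | (0 < n)%N]] = rho%:E)
  (n : nat) (hn : (0 < n)%N) (c s : R) (c0 : (0 <= c)%R) (f : R -> \bar R) :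
  (forall r, `[0%R, s]%classic r -> 0 <= f r <= c%:E) ->
  \int[@lebesgue_measure R]_(r in `[0%R, s]%classic) (f r * (gamma n r)%:E) <= (c * rho)%:E.
Proof.
move=> hf.
have g0 : forall r, `[0%R, s]%classic r -> 0 <= (gamma n r)%:E.
  move=> r; rewrite /= in_itv /= => /andP[r0 _]; rewrite lee_fin; exact: hnn.
apply: (@le_trans _ _ (\int[@lebesgue_measure R]_(r in `[0%R, s]%classic) (c%:E * (gamma n r)%:E))).
  apply: le_int_nm => r rD; have /andP[h1 h2] := hf r rD.
    by apply: mule_ge0 => //; exact: g0.
  by apply: lee_wpmul2r => //; exact: g0.
have [mg _] := integrableP _ _ _ (hint n hn).
have sub : `[0%R, s]%classic `<=` `[0%R, +oo[%classic.
  by move=> r /=; rewrite !in_itv /= => /andP[-> _].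
have mg' := measurable_funS (measurable_itv _) sub mg.
rewrite ge0_integralZl_EFin //.
rewrite EFinM; apply: lee_wpmul2l; first by rewrite lee_fin.
apply: (@le_trans _ _ (\int[@lebesgue_measure R]_(t in `[0%R, +oo[%classic) (gamma n t)%:E)).
  apply: ge0_subset_integral => //.
  move=> r /=; rewrite in_itv /= => /andP[r0 _]; rewrite lee_fin; exact: hnn.
rewrite -hrho; apply: ereal_sup_ubound; by exists n.
Qed.

Theorem lemma4p8 (R : realType) (gamma : nat -> R -> R) (rho : R)
  (hint : forall n : nat, (0 < n)%N ->
     (@lebesgue_measure R).-integrable `[0%R, +oo[%classic (fun t => (gamma n t)%:E))
  (hnn : forall n : nat, (0 < n)%N -> forall t : R, (0 <= t)%R -> (0 <= gamma n t)%R)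
  (hrho : ereal_sup [set \int[@lebesgue_measure R]_(t in `[0%R, +oo[%classic) (gamma n t)%:E
                     | n in [set n : nat | (0 < n)%N]] = rho%:E)
  (hrho1 : (rho < 1)%R) :
  forall (M n : nat) (s : R), (1 <= n)%N -> (n <= M)%N -> (0 <= s)%R ->
    C1 gamma n s M <= ((1 - rho)^-1)%:E /\
    C2 gamma n s M <= ((1 - rho) ^+ 3)^-1%:E.
Proof.
have rho0 : (0 <= rho)%R.
  rewrite -lee_fin -hrho.
  apply: le_trans (ereal_sup_ubound _); last by exists 1%N.
  apply: integral_ge0 => t /=; rewrite in_itv /= => /andP[t0 _].
  rewrite lee_fin; exact: hnn.
set a := ((1 - rho)^-1)%R.
have ha : (a * (1 - rho) = 1)%R by rewrite /a mulVf // subr_eq0 gt_eqF.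
have a0 : (0 < a)%R by rewrite /a invr_gt0 subr_gt0.
have a1 : (1 <= a)%R by nra.
have hb : (((1 - rho) ^+ 3)^-1 = a ^+ 3)%R by rewrite /a exprVn.
rewrite hb.
move=> M n s n1 nM s0.
rewrite /C1 /C2.
have kM : (M - n < M)%N by lia.
suff H : forall k, (k < M)%N -> forall s, (0 <= s)%R ->
   (0 <= Cfun1 gamma M k s <= a%:E) /\ (0 <= Cfun2 gamma M k s <= (a ^+ 3)%:E).
  by have [/andP[_ ->] /andP[_ ->]] := H _ kM s s0.
elim=> [|k IH] kM' {}s {}s0.
  split; apply/andP; split => //; rewrite lee_fin //.
  by apply: exprn_ge0; apply: ltW.
have kM2 : (k < M)%N by lia.
have gpos : (0 < M - k.+1)%N by lia.
have IHr : forall r, `[0%R, s]%classic r ->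
    (0 <= Cfun1 gamma M k (s - r)%R <= a%:E) /\
    (0 <= Cfun2 gamma M k (s - r)%R <= (a ^+ 3)%:E).
  move=> r /=; rewrite in_itv /= => /andP[_ rs]; apply: IH => //.
  by rewrite subr_ge0.
have gnn : forall r, `[0%R, s]%classic r -> 0 <= (gamma (M - k.+1)%N r)%:E.
  move=> r /=; rewrite in_itv /= => /andP[r0 _]; rewrite lee_fin; exact: hnn.
split; apply/andP; split => /=.
- apply: adde_ge0 => //; apply: integral_ge0 => r rD.
  have [/andP[h _] _] := IHr r rD; exact: mule_ge0 (gnn r rD).
- apply: (@le_trans _ _ (1 + (a * rho)%:E)).
    apply: leeD => //; apply: key => //; first exact: ltW.
    by move=> r rD; have [] := IHr r rD.
  by rewrite -EFinD lee_fin; nra.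
- apply: integral_ge0 => r rD; have [/andP[h1 _] /andP[h2 _]] := IHr r rD.
  apply: mule_ge0 (gnn r rD); apply: adde_ge0 => //.
  by apply: mule_ge0; [rewrite lee_fin invr_ge0|exact: mule_ge0].
- apply: (@le_trans _ _ ((a ^+ 3 + 2^-1 * (a * a)) * rho)%:E).
    apply: key => //; first by apply: addr_ge0; [apply: exprn_ge0; exact: ltW|
      apply: mulr_ge0; [rewrite invr_ge0|apply: mulr_ge0; exact: ltW]].
    move=> r rD; have [/andP[h1 h1'] /andP[h2 h2']] := IHr r rD.
    apply/andP; split.
      apply: adde_ge0 => //.
      by apply: mule_ge0; [rewrite lee_fin invr_ge0|exact: mule_ge0].
    rewrite EFinD !EFinM; apply: leeD => //.
    apply: lee_wpmul2l; first by rewrite lee_fin invr_ge0.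
    exact: lee_pmul.
  rewrite lee_fin.
  have e3 : (a ^+ 3 = a * a * a)%R by rewrite !exprS expr0 mulr1 mulrA.
  rewrite e3.
  have aa0 : (0 <= a * a)%R by nra.
  have : (a * a * a * (1 - rho) = a * a)%R by rewrite -mulrA ha mulr1.
  nra.
Qed.
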